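(* Let $n\ge1$ with binary expansion $n=\sum_{i=1}^{\ell}2^{m_i}$, $\ell\ge1$, $m_1>\cdots>m_\ell$. Then: (a) $s(T^{gfb}_n)=n-1-(m_1-m_\ell)$; (b) for every $T\in\mathcal{T}_n$ with $\mathcal{C}(T)=c_n$ that is not isomorphic to $T^{gfb}_n$, one has $s(T)<s(T^{gfb}_n)$.
   Context: Bifurcating trees: rooted trees in which every internal node has exactly two children, considered up to isomorphism; $\mathcal{T}_n$ is the set of such trees with $n$ leaves. For a node $w$, $\kappa_T(w)$ is its number of descendant leaves. The Colless index is $\mathcal{C}(T)=\sum_{v}|\kappa_T(v_1)-\kappa_T(v_2)|$, summed over internal nodes $v$ with children $v_1,v_2$; $c_n=\min\{\mathcal{C}(T):T\in\mathcal{T}_n\}$. An internal node is a symmetry vertex if the subtrees rooted at its two children are isomorphic; $s(T)$ is the number of symmetry vertices of $T$. GFB trees: start with a multiset of $n$ single-node trees; while the multiset has more than one tree, remove a tree $u$ with the minimum number of leaves, then remove a tree $v$ with the minimum number of leaves among the remaining trees, and insert the tree consisting of a new root whose two children are the roots of $u$ and $v$; the final tree is the GFB tree $T^{gfb}_n$ (unique up to isomorphism). *)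

(* Defs.v *)
From mathcomp Require Import all_boot.
Set Implicit Arguments. Unset Strict Implicit. Unset Printing Implicit Defensive.

Inductive tree : Type := Leaf : tree | Node : tree -> tree -> tree.

Fixpoint leaves (t : tree) : nat :=
  match t with Leaf => 1 | Node l r => leaves l + leaves r end.

Fixpoint isob (t u : tree) : bool :=
  match t, u with
  | Leaf, Leaf => true
  | Node a b, Node c d => (isob a c && isob b d) || (isob a d && isob b c)
  | _, _ => false
  end.

(* Colless index: sum over internal nodes of |kappa(v1) - kappa(v2)| *)
Fixpoint colless (t : tree) : nat :=
  match t with
  | Leaf => 0
  | Node l r => ((leaves l - leaves r) + (leaves r - leaves l)) + colless l + colless r
  end.

Fixpoint symv (t : tree) : nat :=
  match t with
  | Leaf => 0
  | Node l r => isob l r + symv l + symv r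
  end.

(* C(T) = c_n where n = leaves T, i.e. T attains the minimum Colless index
   among all trees with the same number of leaves *)
Definition colless_minimal (t : tree) : Prop :=
  forall t', leaves t' = leaves t -> colless t <= colless t'.

Definition gfb_step (l : seq tree) : seq tree :=
  match sort (fun x y => leaves x <= leaves y) l with
  | u :: v :: r => Node u v :: r
  | l' => l'
  end.

Definition gfb (n : nat) : tree := head Leaf (iter n.-1 gfb_step (nseq n Leaf)).

(* Main.v *)
From HB Require Import structures.
Require Import Defs.
From mathcomp Require Import all_boot zify.
Set Implicit Arguments. Unset Strict Implicit.

Definition L n := trunc_log 2 n.
Definition v n := logn 2 n.
Definition d n := L n - v n.
Definition pow2 n := n == 2 ^ L n.

Lemma L1 : L 1 = 0. Proof. by rewrite /L trunc_log1. Qed.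
Lemma L_even m : 0 < m -> L (2 * m) = (L m).+1.
Proof. move=> m0; rewrite /L -trunc_log2_double // -mul2n //. Qed.
Lemma L_odd m : 0 < m -> L (2 * m).+1 = (L m).+1.
Proof.
move=> m0; rewrite /L (trunc_log2S (n:=(2*m).+1)); last by lia.
have -> : (2 * m).+1./2 = m by lia. done.
Qed.
Lemma L_mono m n : m <= n -> L m <= L n.
Proof. exact: leq_trunc_log. Qed.
Lemma L_bounds n : 0 < n -> 2 ^ L n <= n < 2 ^ (L n).+1.
Proof. move=> n0; rewrite /L trunc_logP // trunc_log_ltn //. Qed.
Lemma L_eq n k : 2 ^ k <= n < 2 ^ k.+1 -> L n = k.
Proof. exact: trunc_log_eq. Qed.
Lemma L_pow k : L (2 ^ k) = k.
Proof. exact: trunc_expnK. Qed.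

Lemma v1 : v 1 = 0. Proof. by rewrite /v logn1. Qed.
Lemma v_even m : 0 < m -> v (2 * m) = (v m).+1.
Proof. move=> m0; rewrite /v lognM // logn_prime //. Qed.
Lemma v_odd m : v (2 * m).+1 = 0.
Proof. rewrite /v logn_coprime // coprime2n /=; lia. Qed.

Lemma parity n : {m | n = 2 * m} + {m | n = (2 * m).+1}.
Proof.
case: (boolP (odd n)) => h.
- right; exists n./2; rewrite -[n in LHS]odd_double_half h; lia.
- left; exists n./2; rewrite -[n in LHS]odd_double_half (negbTE h); lia.
Qed.

Lemma v_le_L n : v n <= L n.
Proof.
elim/ltn_ind: n => n IH.
case: (parity n) => [[m hm]|[m hm]]; subst n; last by rewrite v_odd.
case: m IH => [|m] IH; first by rewrite /v /L muln0 logn0.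
rewrite v_even // L_even // ltnS; apply: IH. lia.
Qed.

Lemma pow2P n : reflect (exists k, n = 2 ^ k) (pow2 n).
Proof.
apply: (iffP eqP) => [->|[k ->]]; first by eauto.
by rewrite L_pow.
Qed.

Lemma v_pow k : v (2 ^ k) = k.
Proof. by rewrite /v lognX logn_prime // muln1. Qed.

Lemma d_pow2 n : pow2 n -> d n = 0.
Proof. by case/pow2P => k ->; rewrite /d L_pow v_pow subnn. Qed.

Lemma pow2_gt0 n : pow2 n -> 0 < n.
Proof. by case/pow2P => k ->; rewrite expn_gt0. Qed.

Lemma pow2_double n : pow2 (2 * n) = pow2 n.
Proof.
apply/pow2P/pow2P => [[k hk]|[k ->]]; last by exists k.+1; rewrite expnS.
case: k hk => [|k] hk; first by lia.
exists k; rewrite expnS in hk; lia.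
Qed.

Lemma pow2_odd m : 0 < m -> pow2 (2 * m).+1 = false.
Proof.
move=> m0; apply/negbTE/negP => /pow2P [[|k] hk]; first by lia.
have : odd (2 * m).+1 by rewrite /= oddM.
by rewrite hk expnS oddM.
Qed.

Lemma pow2_1 : pow2 1. Proof. by apply/pow2P; exists 0. Qed.

Lemma pow2_lt x y : pow2 x -> pow2 y -> x < y -> 2 * x <= y.
Proof.
case/pow2P => i -> /pow2P [j ->]; rewrite ltn_exp2l // => h.
by rewrite -expnS leq_exp2l.
Qed.

Lemma d_le_L n : d n <= L n.
Proof. rewrite /d; lia. Qed.

Lemma d_even m : 0 < m -> d (2 * m) = d m.
Proof. move=> m0; rewrite /d L_even // v_even //; lia. Qed.

Lemma d_odd m : 0 < m -> d (2 * m).+1 = (L m).+1.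
Proof. move=> m0; rewrite /d L_odd // v_odd; lia. Qed.

Lemma d1 : d 1 = 0. Proof. by rewrite /d L1 v1. Qed.

Lemma d0_pow2 n : 0 < n -> d n = 0 -> pow2 n.
Proof.
elim/ltn_ind: n => n IH n0.
case: (parity n) => [[m hm]|[m hm]]; subst n.
- rewrite d_even; last lia. rewrite pow2_double => h; apply: IH => //; lia.
- case: m IH n0 => [|m] _ _; first by rewrite pow2_1.
  by rewrite d_odd.
Qed.

Lemma L_succ m : 0 < m -> ~~ pow2 m.+1 -> L m.+1 = L m.
Proof.
move=> m0 np; apply/eqP; rewrite eqn_leq [L m <= _]L_mono // andbT.
have [h1 h2] := andP (L_bounds (ltn0Sn m)).
have : 2 ^ L m.+1 != m.+1 by apply: contra np => /eqP <-; apply/pow2P; eauto.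
move=> h4; have h3 : 2 ^ L m.+1 <= m by rewrite -ltnS ltn_neqAle h4 h1.
by apply: trunc_log_max.
Qed.

Lemma d_succ m : 0 < m -> d m.+1 <= L m.
Proof.
move=> m0; case: (boolP (pow2 m.+1)) => h; first by rewrite d_pow2.
rewrite -L_succ //; exact: d_le_L.
Qed.

Lemma L0_1 y : 0 < y -> L y = 0 -> y = 1.
Proof. move=> y0 h; have := L_bounds y0; rewrite h; lia. Qed.

Fixpoint cf (k n : nat) : nat :=
  match k with
  | 0 => 0
  | k'.+1 => if n <= 1 then 0 else
      if odd n then cf k' n./2 + cf k' (n./2).+1 + 1 else 2 * cf k' n./2
  end.
Definition c n := cf n n.

Lemma cf_stab k1 k2 n : n <= k1 -> n <= k2 -> cf k1 n = cf k2 n.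
Proof.
elim: k1 k2 n => [|k1 IH] [|k2] n h1 h2 /=.
- done.
- by have -> : n <= 1 by lia.
- by have -> : n <= 1 by lia.
- case: ifP => // n1; case: ifP => on.
  + rewrite !(IH k2) //; move: (odd_double_half n); rewrite on; lia.
  + rewrite (IH k2) //; move: (odd_double_half n); rewrite on; lia.
Qed.

Lemma c0 : c 0 = 0. Proof. by []. Qed.
Lemma c1 : c 1 = 0. Proof. by []. Qed.

Lemma cf_S k n : cf k.+1 n = if n <= 1 then 0 else
      if odd n then cf k n./2 + cf k (n./2).+1 + 1 else 2 * cf k n./2.
Proof. by []. Qed.

Lemma cE n m : n = 2 * m -> 0 < m -> c n = 2 * c m.
Proof.
move=> -> m0; rewrite /c.
have -> : cf (2 * m) (2 * m) = cf (2 * m - 1).+1 (2 * m) by congr cf; lia.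
rewrite cf_S.
have -> : (2 * m <= 1) = false by lia.
rewrite oddM /=.
have -> : (2 * m)./2 = m by lia.
by rewrite (cf_stab (k2 := m)) //; lia.
Qed.

Lemma cO n m : n = (2 * m).+1 -> 0 < m -> c n = c m + c m.+1 + 1.
Proof.
move=> -> m0; rewrite /c cf_S.
have -> : ((2 * m).+1 <= 1) = false by lia.
have -> : odd (2 * m).+1 = true by rewrite oddS oddM.
have -> : (2 * m).+1./2 = m by lia.
rewrite (cf_stab (k2 := m)) ?(cf_stab (k1 := 2 * m) (k2 := m.+1)) //; lia.
Qed.

Lemma L_lt n : 0 < n -> L n < n.
Proof.
case: n => [|n] // _.
have [h _] := andP (L_bounds (ltn0Sn n)).
apply: leq_trans h; exact: ltn_expl.
Qed.

Lemma L_le2 n : 2 < n -> (L n).+2 <= n.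
Proof.
move=> n2; have [h _] := andP (L_bounds (ltnW (ltnW n2))).
have : (L n).+2 <= 2 ^ L n \/ L n <= 1.
  case: (L n) => [|[|k]]; [by right|by right|left].
  elim: k => [|k IH]; first by []. rewrite expnS; lia.
case=> h2; lia.
Qed.

Lemma Cstep a : 0 < a -> c a.+1 <= c a + L a.
Proof.
elim/ltn_ind: a => a IH a0.
case: (parity a) => [[m hm]|[m hm]]; subst a.
- have m0 : 0 < m by lia.
  rewrite (cO (n := (2 * m).+1) (m := m)) // (cE (n := 2 * m) (m := m)) // L_even //.
  have := IH m. lia.
- case: m IH a0 => [|m] IH a0. 
  + by rewrite L1.
  + have e1 := cE (n := (2 * m.+1).+2) (m := m.+2).
    have e2 := cO (n := (2 * m.+1).+1) (m := m.+1).
    rewrite L_odd //. rewrite e1; try lia. rewrite e2; try lia.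
    have := IH m.+1; lia.
Qed.

Definition ad a b := (a - b) + (b - a).

Lemma sym_ind (P : nat -> nat -> Prop) :
  (forall a b, P a b -> P b a) ->
  (forall s, (forall a b, a + b < s -> P a b) -> forall a b, a + b = s -> b <= a -> P a b) ->
  forall a b, P a b.
Proof.
move=> Psym H a b.
move: {2}(a + b) (erefl (a + b)) => s; elim/ltn_ind: s a b => s IH a b hs.
case: (leqP b a) => hab.
- by apply: (H s) => // x y hxy; exact: (IH _ hxy x y erefl).
- apply: Psym; apply: (H s); [|lia|lia].
  by move=> x y hxy; exact: (IH _ hxy x y erefl).
Qed.

Lemma cEx m : 0 < m -> c (2 * m) = 2 * c m.
Proof. by move=> m0; apply: cE. Qed.
Lemma cOx m : 0 < m -> c (2 * m).+1 = c m + c m.+1 + 1.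
Proof. by move=> m0; apply: cO. Qed.

Lemma F0 a b : c (a + b) <= c a + c b + ad a b.
Proof.
move: a b; apply: sym_ind => [a b|s IH a b hs ba]; last subst s.
  by rewrite addnC /ad; lia.
rewrite /ad.
case: b IH ba => [|b] IH ba; first by rewrite addn0; lia.
case: b IH ba => [|b] IH ba.
  rewrite addn1 c1; have := Cstep (a := a); have := L_lt (n := a); lia.
case: (eqVneq a b.+2) => [->|ab].
  have -> : b.+2 + b.+2 = 2 * b.+2 by lia.
  rewrite cEx; lia.
have {}ba : b.+2 < a by lia.
case: (parity a) => [[x hx]|[x hx]]; case: (parity b.+2) => [[y hy]|[y hy]]; rewrite hx hy; subst a.
- have y0 : 0 < y by lia.
  have -> : 2 * x + 2 * y = 2 * (x + y) by lia.
  rewrite !cEx; try lia.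
  have := IH x y; rewrite /ad; lia.
- have y0 : 0 < y by lia.
  have -> : 2 * x + (2 * y).+1 = (2 * (x + y)).+1 by lia.
  rewrite cEx ?cOx; try lia.
  move: (IH x y) (IH x y.+1); rewrite /ad ?addnS ?addSn; lia.
- have y0 : 0 < y by lia.
  have -> : (2 * x).+1 + 2 * y = (2 * (x + y)).+1 by lia.
  rewrite cEx ?cOx; try lia.
  move: (IH x y) (IH x.+1 y); rewrite /ad ?addnS ?addSn; lia.
- have y0 : 0 < y by lia.
  have -> : (2 * x).+1 + (2 * y).+1 = 2 * (x + y).+1 by lia.
  rewrite cEx ?cOx; try lia.
  move: (IH x.+1 y) (IH x y.+1); rewrite /ad ?addnS ?addSn; lia.
Qed.

Lemma F1 x y : 0 < y -> 2 * y < x -> c (x + y) < c x + c y + (x - y).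
Proof.
move: {2}(x + y) (erefl (x + y)) => s; elim/ltn_ind: s x y => s IH0 x y hs y0 yx.
subst s.
have IH : forall a b, a + b < x + y -> 0 < b -> 2 * b < a -> c (a + b) < c a + c b + (a - b).
  by move=> a b h; exact: IH0 _ h a b erefl.
clear IH0.
case: y IH y0 yx => [|y] // IH _ yx.
case: y IH yx => [|y] IH yx.
  rewrite addn1 c1; have := Cstep (a := x); have := L_le2 (n := x); lia.
case: (parity x) => [[X hx]|[X hx]]; case: (parity y.+2) => [[Y hy]|[Y hy]]; rewrite hx hy; subst x.
- have Y0 : 0 < Y by lia.
  have -> : 2 * X + 2 * Y = 2 * (X + Y) by lia.
  rewrite !cEx; try lia.
  move: (IH X Y); lia.
- have Y0 : 0 < Y by lia.
  have -> : 2 * X + (2 * Y).+1 = (2 * (X + Y)).+1 by lia.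
  rewrite cEx ?cOx; try lia.
  move: (IH X Y) (F0 X Y.+1); rewrite /ad ?addnS ?addSn; lia.
- have Y0 : 0 < Y by lia.
  have -> : (2 * X).+1 + 2 * Y = (2 * (X + Y)).+1 by lia.
  rewrite cEx ?cOx; try lia.
  move: (IH X Y) (IH X.+1 Y) (F0 X Y) (F0 X.+1 Y).
  rewrite /ad ?addnS ?addSn; lia.
- have Y0 : 0 < Y by lia.
  have -> : (2 * X).+1 + (2 * Y).+1 = 2 * (X + Y).+1 by lia.
  rewrite cEx ?cOx; try lia.
  move: (F0 X.+1 Y) (F0 X Y.+1); rewrite /ad ?addnS ?addSn; lia.
Qed.

Definition GS a b := [&& pow2 a || pow2 b, a <= 2 * b & b <= 2 * a].
Definition Dl a b := d (a + b) + (a == b) + 2 * c (a + b).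
Definition Dr a b := d a + d b + 1 + 2 * (c a + c b + ad a b).

Lemma GS_sym a b : GS a b = GS b a.
Proof. by rewrite /GS orbC; congr (_ && _); rewrite andbC. Qed.
Lemma Dl_sym a b : Dl a b = Dl b a.
Proof. by rewrite /Dl [b + a]addnC eq_sym. Qed.
Lemma Dr_sym a b : Dr a b = Dr b a.
Proof. rewrite /Dr /ad; lia. Qed.

Lemma L3 a : 2 < a -> 3 * L a + 2 <= 2 * a.
Proof.
move=> a2; have [h _] := andP (L_bounds (ltnW (ltnW a2))).
have : L a <= 1 \/ 3 * L a + 2 <= 2 * 2 ^ L a.
  case: (L a) => [|[|k]]; [by left|by left|right].
  elim: k => [|k IH]; first by []. rewrite expnS; lia.
case=> h2; lia.
Qed.

Lemma d_oddn n : odd n -> d n = L n.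
Proof.
move=> on; rewrite /d.
have -> : v n = 0 by rewrite /v logn_coprime // coprime2n.
lia.
Qed.

Lemma dlt_even m : 0 < m -> d (2 * m) < L (2 * m).
Proof. move=> m0; rewrite d_even // L_even //; have := d_le_L m; lia. Qed.

Lemma eqF (a b : nat) : a != b -> (a == b) = false.
Proof. by move/negbTE. Qed.

Lemma d3 : d 3 = 1. Proof. by rewrite (d_odd (m := 1)) ?L1. Qed.
Lemma d2 : d 2 = 0. Proof. by rewrite (d_even (m := 1)) ?d1. Qed.
Lemma c2 : c 2 = 0. Proof. by rewrite (cEx (m := 1)). Qed.
Lemma c3 : c 3 = 1. Proof. by rewrite (cOx (m := 1)) // c2. Qed.

Lemma Core a b : 0 < a -> 0 < b -> Dl a b <= Dr a b /\ (Dl a b = Dr a b -> GS a b).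
Proof.
move: a b; apply: sym_ind => [a b H a0 b0|s IH0 a b hs ba a0 b0].
  by rewrite Dl_sym Dr_sym GS_sym; apply: H.
subst s.
have IH : forall x y, x + y < a + b -> 0 < x -> 0 < y ->
    Dl x y <= Dr x y /\ (Dl x y = Dr x y -> GS x y).
  by move=> x y h; exact: IH0 x y h.
clear IH0.
case: (eqVneq a b) => ab.
  subst b; rewrite /Dl /Dr eqxx.
  have -> : a + a = 2 * a by lia.
  rewrite d_even // cEx //; split; first by rewrite /ad; lia.
  move=> h; have : d a = 0 by rewrite /ad in h; lia.
  move/(d0_pow2 a0) => pa; rewrite /GS pa /=; apply/andP; split; lia.
rewrite /Dl (eqF ab).
have {}ba : b < a by lia.
have [b1|b2] : b = 1 \/ 1 < b by lia.
  subst b; have [a2|a3] : a = 2 \/ 2 < a by lia.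
    subst a; rewrite /Dr /ad d3 d2 d1 c3 c2 c1; split => //.
  rewrite addn1 /Dr /ad c1 d1.
  have := Cstep a0; have := d_succ a0; have := L3 a3.
  move=> *; split; first lia. move=> *; exfalso; lia.
case: (parity a) => [[x hx]|[x hx]]; case: (parity b) => [[y hy]|[y hy]]; subst a b.
-
  have x0 : 0 < x by lia. have y0 : 0 < y by lia. have xy : x != y by apply/eqP; lia.
  have [h1 h2] := IH x y ltac:(lia) x0 y0.
  rewrite /Dl (eqF xy) in h1 h2.
  have := F0 x y.
  have -> : 2 * x + 2 * y = 2 * (x + y) by lia.
  rewrite /Dr /ad !d_even ?cEx //; try lia.
  rewrite /Dr /ad in h1 h2 => h3.
  split; first lia.
  move=> heq; have /and3P [p q r] := h2 ltac:(lia).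
  rewrite /GS !pow2_double p; apply/andP; split; lia.
-
  have x0 : 0 < x by lia. have y0 : 0 < y by lia.
  have -> : 2 * x + (2 * y).+1 = (2 * (x + y)).+1 by lia.
  rewrite /Dr /ad d_even ?d_odd ?cEx ?cOx //; try lia.
  case: (boolP (odd (x + y))) => oxy.
  + have xy : x != y by apply/eqP => exy; move: oxy; rewrite exy addnn odd_double.
    have [h1 h2] := IH x y ltac:(lia) x0 y0.
    rewrite /Dl /Dr /ad (eqF xy) in h1 h2.
    have := F0 x y.+1; rewrite /ad addnS => h3.
    have := d_oddn oxy; have := d_le_L y => h4 h5.
    split; first lia.
    move=> heq; have /and3P [p q r] := h2 ltac:(lia).
    rewrite /GS; apply/and3P; split; [|lia|lia].
    case/orP: p => p; first by rewrite pow2_double p.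
    have y1 : y = 1 by apply: L0_1 => //; have := d_pow2 p; lia.
    have x2 : x = 2 by lia.
    by rewrite x2; apply/orP; left; apply/pow2P; exists 2.
  + have h5 : d (x + y).+1 = L (x + y).+1 by apply: d_oddn; rewrite /= oxy.
    have [h1 h2] := IH x y.+1 ltac:(lia) x0 (ltn0Sn y).
    have := F0 x y; have := F1 (x := x) y0; have := d_succ y0; have := L_mono (leqnSn (x + y)).
    rewrite /ad => h3 h4 h6 h7.
    rewrite /Dl /Dr /ad addnS in h1 h2.
    case: (eqVneq x y.+1) => [exy|nxy].
      rewrite exy eqxx in h1 h2; rewrite -exy in h1 h2.
      split; first lia. move=> heq; exfalso; lia.
    rewrite (eqF nxy) in h1 h2.
    split; first lia.
    move=> heq; have /and3P [p q r] := h2 ltac:(lia).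
    rewrite /GS; apply/and3P; split; [|lia|lia].
    case/orP: p => p; first by rewrite pow2_double p.
    have y1 : y = 1 by apply: L0_1 => //; have := d_pow2 p; lia.
    exfalso; lia.
-
  have x0 : 0 < x by lia. have y0 : 0 < y by lia.
  have -> : (2 * x).+1 + 2 * y = (2 * (x + y)).+1 by lia.
  rewrite /Dr /ad d_even ?d_odd ?cEx ?cOx //; try lia.
  case: (boolP (odd (x + y))) => oxy.
  + have xy : x != y by apply/eqP => exy; move: oxy; rewrite exy addnn odd_double.
    have [h1 h2] := IH x y ltac:(lia) x0 y0.
    rewrite /Dl /Dr /ad (eqF xy) in h1 h2.
    have := F0 x.+1 y; rewrite /ad addSn => h3.
    have := d_oddn oxy; have := d_le_L x => h4 h5.
    have h6 : x = 2 * y -> d x < L x by move=> ->; apply: dlt_even.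
    split; first lia.
    move=> heq; have /and3P [p q r] := h2 ltac:(lia).
    rewrite /GS; apply/and3P; split; [|lia|lia].
    case/orP: p => p; last by rewrite pow2_double p orbT.
    have x1 : x = 1 by apply: L0_1 => //; have := d_pow2 p; lia.
    have y1 : y = 1 by lia.
    by move: oxy; rewrite x1 y1.
  + have h5 : d (x + y).+1 = L (x + y).+1 by apply: d_oddn; rewrite /= oxy.
    have [h1 h2] := IH x.+1 y ltac:(lia) (ltn0Sn x) y0.
    have := F0 x y; have := d_succ x0; have := L_mono (leqnSn (x + y)).
    rewrite /ad => h3 h4 h6.
    have nxy : x.+1 != y by apply/eqP; lia.
    rewrite /Dl /Dr /ad addSn (eqF nxy) in h1 h2.
    split; first lia.
    move=> heq; have /and3P [p q r] := h2 ltac:(lia).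
    rewrite /GS; apply/and3P; split; [|lia|lia].
    case/orP: p => p; last by rewrite pow2_double p orbT.
    have x1 : x = 1 by apply: L0_1 => //; have := d_pow2 p; lia.
    have y1 : y = 1 by lia.
    by rewrite y1 pow2_double pow2_1 orbT.
-
  have x0 : 0 < x by lia. have y0 : 0 < y by lia.
  have -> : (2 * x).+1 + (2 * y).+1 = 2 * (x + y).+1 by lia.
  rewrite /Dr /ad d_even ?d_odd ?cEx ?cOx //; try lia.
  have := F0 x.+1 y; have := F0 x y.+1; rewrite /ad addnS addSn => h1 h2.
  have := d_le_L (x + y).+1; have := L_mono (_ : (x + y).+1 <= 2 * x); have := L_even x0.
  move=> h3 h4 h5; have {}h4 := h4 ltac:(lia).
  split; first lia. move=> *; exfalso; lia.
Qed.

Lemma pow2_cmp x y : pow2 x -> pow2 y -> x = y \/ 2 * x <= y \/ 2 * y <= x.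
Proof.
move=> px py; case: (ltngtP x y) => h.
- by right; left; apply: pow2_lt.
- by right; right; apply: pow2_lt.
- by left.
Qed.

Lemma GSu a b a' b' : GS a b -> GS a' b' -> a + b = a' + b' ->
  (a = a' /\ b = b') \/ (a = b' /\ b = a').
Proof.
move=> /and3P [p q r] /and3P [p' q' r'] e.
case/orP: p => p; case/orP: p' => p'.
- have := pow2_cmp p p'; lia.
- have := pow2_cmp p p'; lia.
- have := pow2_cmp p p'; lia.
- have := pow2_cmp p p'; lia.
Qed.

Lemma GS_pow2 a b : GS a b -> pow2 a || pow2 b.
Proof. by case/and3P. Qed.

Lemma GSd a b : 0 < a -> 0 < b -> GS a b -> d (a + b) + (a == b) = d a + d b + 1.
Proof.
move: a b; apply: sym_ind => [a b H a0 b0|s IH0 a b hs ba a0 b0].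
  by rewrite [b + a]addnC eq_sym GS_sym => h; rewrite H //; lia.
subst s.
have IH : forall x y, x + y < a + b -> 0 < x -> 0 < y ->
    GS x y -> d (x + y) + (x == y) = d x + d y + 1.
  by move=> x y h; exact: IH0 x y h.
clear IH0; cbv beta.
case: (eqVneq a b) => ab.
  subst b => /GS_pow2; rewrite orbb => pa.
  have -> : a + a = 2 * a by lia.
  rewrite d_even // d_pow2 //.

have {}ba : b < a by lia.
have [b1|b2] : b = 1 \/ 1 < b by lia.
  subst b => /and3P [_ q _]; have a2 : a = 2 by lia.
  by subst a; rewrite d3 d2 d1.
case: (parity a) => [[x hx]|[x hx]]; case: (parity b) => [[y hy]|[y hy]]; subst a b.
- have x0 : 0 < x by lia. have y0 : 0 < y by lia. have xy : x != y by apply/eqP; lia.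
  move=> /and3P [p q r].
  have g : GS x y by rewrite /GS -(pow2_double x) -(pow2_double y) p; apply/andP; split; lia.
  have := IH x y ltac:(lia) x0 y0 g; rewrite (eqF xy).
  have -> : 2 * x + 2 * y = 2 * (x + y) by lia.
  rewrite !d_even //; lia.
- have x0 : 0 < x by lia. have y0 : 0 < y by lia.
  move=> /and3P [p q r]; move: p; rewrite pow2_odd // orbF pow2_double.
  case/pow2P => [[|k] ek]; first by lia.
  have P0 : 0 < 2 ^ k by rewrite expn_gt0.
  rewrite expnS in ek.
  have Ly : L y = k by apply: L_eq; rewrite expnS; apply/andP; split; lia.
  have Lxy : L (x + y) = k.+1 by apply: L_eq; rewrite !expnS; apply/andP; split; lia.
  have dx : d x = 0 by apply: d_pow2; apply/pow2P; exists k.+1; rewrite expnS.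
  have -> : 2 * x + (2 * y).+1 = (2 * (x + y)).+1 by lia.
  rewrite d_odd ?d_even ?d_odd //; try lia.
- have x0 : 0 < x by lia. have y0 : 0 < y by lia.
  move=> /and3P [p q r]; move: p; rewrite pow2_odd // orFb pow2_double.
  case/pow2P => k ek.
  have P0 : 0 < 2 ^ k by rewrite expn_gt0.
  have Lx : L x = k by apply: L_eq; rewrite expnS; apply/andP; split; lia.
  have Lxy : L (x + y) = k.+1 by apply: L_eq; rewrite !expnS; apply/andP; split; lia.
  have dy : d y = 0 by apply: d_pow2; apply/pow2P; exists k.
  have -> : (2 * x).+1 + 2 * y = (2 * (x + y)).+1 by lia.
  rewrite d_odd ?d_even ?d_odd //; try lia.
- have x0 : 0 < x by lia. have y0 : 0 < y by lia.
  by case/and3P; rewrite !pow2_odd.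
Qed.

Lemma GSc a b : 0 < a -> 0 < b -> GS a b -> c (a + b) = c a + c b + ad a b.
Proof.
move: a b; apply: sym_ind => [a b H a0 b0|s IH0 a b hs ba a0 b0].
  rewrite [b + a]addnC GS_sym => h; rewrite H //; rewrite /ad; lia.
subst s.
have IH : forall x y, x + y < a + b -> 0 < x -> 0 < y ->
    GS x y -> c (x + y) = c x + c y + ad x y.
  by move=> x y h; exact: IH0 x y h.
clear IH0; cbv beta.
rewrite /ad.
case: (eqVneq a b) => ab.
  subst b => _. have -> : a + a = 2 * a by lia.
  rewrite cEx //; lia.
have {}ba : b < a by lia.
have [b1|b2] : b = 1 \/ 1 < b by lia.
  subst b => /and3P [_ q _]; have a2 : a = 2 by lia.
  by subst a; rewrite c3 c2 c1.
case: (parity a) => [[x hx]|[x hx]]; case: (parity b) => [[y hy]|[y hy]]; subst a b.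
- have x0 : 0 < x by lia. have y0 : 0 < y by lia.
  move=> /and3P [p q r].
  have g : GS x y by rewrite /GS -(pow2_double x) -(pow2_double y) p; apply/andP; split; lia.
  have := IH x y ltac:(lia) x0 y0 g; rewrite /ad.
  have -> : 2 * x + 2 * y = 2 * (x + y) by lia.
  rewrite !cEx //; lia.
- have x0 : 0 < x by lia. have y0 : 0 < y by lia.
  move=> /and3P [p q r]; move: p; rewrite pow2_odd // orbF pow2_double => p.
  have nx : x != (2 * y).+1 by apply/eqP => e; move: p; rewrite e pow2_odd.
  have g1 : GS x y by rewrite /GS p; apply/andP; split; lia.
  have g2 : GS x y.+1 by rewrite /GS p; apply/andP; split; lia.
  have := IH x y ltac:(lia) x0 y0 g1; have := IH x y.+1 ltac:(lia) x0 (ltn0Sn y) g2.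
  rewrite /ad addnS.
  have -> : 2 * x + (2 * y).+1 = (2 * (x + y)).+1 by lia.
  rewrite cEx ?cOx //; try lia.
- have x0 : 0 < x by lia. have y0 : 0 < y by lia.
  move=> /and3P [p q r]; move: p; rewrite pow2_odd // orFb pow2_double => p.
  have g1 : GS x y by rewrite /GS p orbT; apply/andP; split; lia.
  have g2 : GS x.+1 y by rewrite /GS p orbT; apply/andP; split; lia.
  have := IH x y ltac:(lia) x0 y0 g1; have := IH x.+1 y ltac:(lia) (ltn0Sn x) y0 g2.
  rewrite /ad addSn.
  have -> : (2 * x).+1 + 2 * y = (2 * (x + y)).+1 by lia.
  rewrite cEx ?cOx //; try lia.
- have x0 : 0 < x by lia. have y0 : 0 < y by lia.
  by case/and3P; rewrite !pow2_odd.
Qed.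

Fixpoint gshape (t : tree) : bool :=
  match t with
  | Leaf => true
  | Node l r => [&& GS (leaves l) (leaves r), gshape l & gshape r]
  end.

Lemma leaves_gt0 t : 0 < leaves t.
Proof. elim: t => //= l IHl r IHr; lia. Qed.

Lemma isob_leaves t u : isob t u -> leaves t = leaves u.
Proof.
elim: t u => [|l IHl r IHr] [|l' r'] //=.
case/orP => /andP [h1 h2].
- by rewrite (IHl _ h1) (IHr _ h2).
- by rewrite (IHl _ h1) (IHr _ h2) addnC.
Qed.

Lemma shape_uniq t u : gshape t -> gshape u -> leaves t = leaves u -> isob t u.
Proof.
elim: t u => [|l IHl r IHr] [|l' r'] //=.
- by move=> _ _ e; have := leaves_gt0 l'; have := leaves_gt0 r'; lia.
- by move=> _ _ e; have := leaves_gt0 l; have := leaves_gt0 r; lia.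
move=> /and3P [g sl sr] /and3P [g' sl' sr'] e.
case: (GSu g g' e) => [[e1 e2]|[e1 e2]].
- by rewrite (IHl l') // (IHr r').
- by rewrite (IHl r') // (IHr l') // orbT.
Qed.

Lemma isob_le l r : isob l r <= (leaves l == leaves r).
Proof.
case: (boolP (isob l r)) => // h; by rewrite (isob_leaves h) eqxx.
Qed.

Lemma ML T : symv T + d (leaves T) + 2 * c (leaves T) + 1 <= 2 * colless T + leaves T
  /\ (symv T + d (leaves T) + 2 * c (leaves T) + 1 = 2 * colless T + leaves T -> gshape T).
Proof.
elim: T => [|l [IHl1 IHl2] r [IHr1 IHr2]].
  by rewrite /= d1 c1.
rewrite /=.
have a0 := leaves_gt0 l; have b0 := leaves_gt0 r.
have [C1 C2] := Core a0 b0.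
have ib := isob_le l r.
move: C1 C2 ib IHl1 IHl2 IHr1 IHr2.
rewrite /Dl /Dr /ad.
set a := leaves l; set b := leaves r.
set il := isob l r; set e := (a == b).
move=> C1 C2 ib IHl1 IHl2 IHr1 IHr2.
split; first lia.
move=> heq.
rewrite C2 ?IHl2 ?IHr2 //; lia.
Qed.

Lemma shape_eq T : gshape T ->
  symv T + d (leaves T) + 2 * c (leaves T) + 1 = 2 * colless T + leaves T.
Proof.
elim: T => [|l IHl r IHr]; first by rewrite /= d1 c1.
rewrite /= => /and3P [g sl sr].
have a0 := leaves_gt0 l; have b0 := leaves_gt0 r.
have E1 := GSd a0 b0 g; have E2 := GSc a0 b0 g.
have ie : isob l r = (leaves l == leaves r).
  case: eqP => e; first by apply: shape_uniq.
  by apply/negbTE/negP => /isob_leaves.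
move: (IHl sl) (IHr sr) E1 E2; rewrite ie /ad.
set a := leaves l; set b := leaves r; set e := (a == b).
lia.
Qed.

Fixpoint tree_eqb (t u : tree) : bool :=
  match t, u with
  | Leaf, Leaf => true
  | Node a b, Node c d => tree_eqb a c && tree_eqb b d
  | _, _ => false
  end.

Lemma tree_eqP : Equality.axiom tree_eqb.
Proof.
move=> t u; elim: t u => [|a IHa b IHb] [|c d] /=; try by constructor.
case: (IHa c) => [->|ne] /=; last by constructor; case.
case: (IHb d) => [->|ne] /=; last by constructor; case.
by constructor.
Qed.

HB.instance Definition _ := hasDecEq.Build tree tree_eqP.

Definition npw (t : tree) := ~~ pow2 (leaves t).

Definition Inv (l : seq tree) :=
  [/\ all gshape l, {in l &, forall x y, leaves x <= 2 * leaves y} & count npw l <= 1].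

Lemma Inv_perm l l' : perm_eq l l' -> Inv l' -> Inv l.
Proof.
move=> pe [h1 h2 h3]; split.
- by rewrite (perm_all _ pe).
- by move=> x y; rewrite !(perm_mem pe); apply: h2.
- by move/permP: pe => ->.
Qed.

Lemma aux (a b : bool) n : a + (b + n) <= 1 -> 0 < n -> a = false /\ b = false.
Proof. case: a; case: b => /=; lia. Qed.

Lemma aux2 (lu lv ly : nat) : pow2 lu -> pow2 lv -> ~~ pow2 (lu + lv) ->
  lu <= lv -> lv <= ly -> ly <= 2 * lu -> 0 < lu -> pow2 ly.
Proof.
move=> pu pv pw h1 h2 h3 h4.
case: (pow2_cmp pu pv) => [e|[e|e]].
- by move: pw; rewrite e addnn -mul2n pow2_double pv.
- by have -> : ly = lv by lia.
- exfalso; lia.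
Qed.

Lemma step_inv l : Inv l -> 1 < size l ->
  [/\ Inv (gfb_step l), size (gfb_step l) = (size l).-1 &
      sumn (map leaves (gfb_step l)) = sumn (map leaves l)].
Proof.
move=> I sl; rewrite /gfb_step.
set R := (fun x y : tree => leaves x <= leaves y).
have pe : perm_eq (sort R l) l by rewrite perm_sort.
have so : sorted R (sort R l) by apply: sort_sorted => x y; exact: leq_total.
have I' := Inv_perm pe I.
have ss := size_sort R l.
have sm : sumn (map leaves (sort R l)) = sumn (map leaves l).
  by apply: perm_sumn; apply: perm_map.
move: I' ss sm so; case: (sort R l) => [|u [|v r]] //=; try by move=> _ ss; lia.
move=> [h1 h2 h3] ss sm so.
have Ruv : leaves u <= leaves v by case/andP: so.
have Rvr : all (R v) r.
  apply: order_path_min; last by case/andP: so.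
  by move=> x y z; exact: leq_trans.
move: h1 => /and3P [su sv sr].
have puv : leaves u <= 2 * leaves v by apply: h2; rewrite !inE eqxx ?orbT.
have pvu : leaves v <= 2 * leaves u by apply: h2; rewrite !inE eqxx ?orbT.
have hr : forall x, x \in r -> leaves v <= leaves x by move=> x xr; exact: (allP Rvr x xr).
have h2r : forall x y, x \in r -> y \in u :: v :: r -> leaves x <= 2 * leaves y.
  by move=> x y xr yl; apply: h2 => //; rewrite !inE xr !orbT.
have h2l : forall x y, x \in u :: v :: r -> y \in r -> leaves x <= 2 * leaves y.
  by move=> x y xl yr; apply: h2 => //; rewrite !inE yr !orbT.
split.
- split.
  + apply/andP; split; last by [].
    rewrite /= su sv /GS puv pvu !andbT.
    move: h3; rewrite /= /npw.
    by case: (pow2 (leaves u)); case: (pow2 (leaves v)).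
  + move=> x y; rewrite !inE => /orP [/eqP ->|xr] /orP [/eqP ->|yr] /=.
    * lia.
    * have := h2l u y; have := h2l v y; rewrite !inE !eqxx ?orbT => /(_ isT yr) + /(_ isT yr).
      have := hr y yr; lia.
    * have := h2r x u xr; rewrite !inE eqxx => /(_ isT); lia.
    * by apply: h2r => //; rewrite !inE yr !orbT.
  + rewrite /=.
    have -> : npw (Node u v) = ~~ pow2 (leaves u + leaves v) by [].
    case: (boolP (pow2 (leaves u + leaves v))) => pw /=; first by move: h3 => /=; lia.
    have cr : count npw r = 0.
      apply/eqP; apply: contraTT isT => /negbTE nz.
      have : has npw r by rewrite has_count lt0n nz.
      case/hasP => y yr ny.
      have h3' : npw u + (npw v + count npw r) <= 1 by move: h3 => /=.
      have cpos : 0 < count npw r by rewrite lt0n nz.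
      have [] := aux h3' cpos.
      rewrite /npw => /negbFE pu /negbFE pv.
      have hy := hr y yr.
      have hyu := h2r y u yr; rewrite !inE eqxx in hyu; have {}hyu := hyu isT.
      have gu := leaves_gt0 u.
      by move: ny; rewrite /npw (aux2 pu pv pw Ruv hy hyu gu).
    by rewrite cr.
- by rewrite /= -ss.
- by rewrite -sm /= addnA.
Qed.

Lemma iter_inv n k : k < n ->
  [/\ Inv (iter k gfb_step (nseq n Leaf)), size (iter k gfb_step (nseq n Leaf)) = n - k &
      sumn (map leaves (iter k gfb_step (nseq n Leaf))) = n].
Proof.
elim: k => [|k IH] kn /=.
- split.
  + split.
    * by apply/allP => x; rewrite mem_nseq => /andP [_ /eqP ->].
    * by move=> x y; rewrite !mem_nseq => /andP [_ /eqP ->] /andP [_ /eqP ->].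
    * by rewrite count_nseq (_ : npw Leaf = false) // /npw /= pow2_1.
  + by rewrite size_nseq subn0.
  + by rewrite map_nseq sumn_nseq mul1n.
- have [I s sm] := IH (ltnW kn).
  have [I' s' sm'] := step_inv I ltac:(lia).
  split => //; [by rewrite s' s; lia | by rewrite sm'].
Qed.

Lemma gfb_shape n : 0 < n -> gshape (gfb n) /\ leaves (gfb n) = n.
Proof.
move=> n0; have [[h1 _ _] s sm] := iter_inv (k := n.-1) (n := n) ltac:(lia).
rewrite /gfb; move: h1 s sm.
case: (iter n.-1 gfb_step (nseq n Leaf)) => [|t [|t' r]] /=; try lia.
Qed.

Lemma shape_vals T : gshape T ->
  symv T + d (leaves T) + 1 = leaves T /\ colless T = c (leaves T).
Proof.
elim: T => [|l IHl r IHr]; first by rewrite /= d1 c1.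
rewrite /= => /and3P [g sl sr].
have a0 := leaves_gt0 l; have b0 := leaves_gt0 r.
have E1 := GSd a0 b0 g; have E2 := GSc a0 b0 g.
have ie : isob l r = (leaves l == leaves r).
  case: eqP => e; first by apply: shape_uniq.
  by apply/negbTE/negP => /isob_leaves.
have [s1 c1'] := IHl sl; have [s2 c2'] := IHr sr.
rewrite ie c1' c2' E2 /ad; move: E1 s1 s2.
set a := leaves l; set b := leaves r; set e := (a == b).
lia.
Qed.

Lemma binexp ms : ms != [::] -> sorted gtn ms ->
  [/\ 2 ^ (head 0 ms) <= \sum_(m <- ms) 2 ^ m < 2 ^ (head 0 ms).+1,
      last 0 ms <= head 0 ms &
      exists q, odd q /\ \sum_(m <- ms) 2 ^ m = 2 ^ (last 0 ms) * q].
Proof.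
elim: ms => [//|m ms IH] _ /=.
case: ms IH => [|m' ms] IH so.
  rewrite big_cons big_nil addn0; split => //.
  - by rewrite leqnn expnS ltn_Pmull // expn_gt0.
  - by exists 1; rewrite muln1.
move: so => /andP [mm' so'].
have [/andP [b1 b2] e1 [q [oq eq]]] := IH isT so'.
rewrite big_cons; move: b1 b2 e1 eq; rewrite /=.
set S := \sum_(j <- m' :: ms) 2 ^ j; set e := last m' ms => b1 b2 e1 eq.
have mm : m' < m by [].
split.
- apply/andP; split; first by rewrite leq_addr.
  rewrite expnS; have : 2 ^ m'.+1 <= 2 ^ m by rewrite leq_exp2l.
  lia.
- lia.
- exists (2 ^ (m - e) + q); split.
  + rewrite oddD oddX oq; have -> : (m - e == 0) = false by lia. by [].
  + by rewrite mulnDr -expnD subnKC ?eq //; lia.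
Qed.

Lemma d_binexp ms : ms != [::] -> sorted gtn ms ->
  d (\sum_(m <- ms) 2 ^ m) = head 0 ms - last 0 ms.
Proof.
move=> ne so; have [b _ [q [oq e]]] := binexp ne so.
rewrite /d (L_eq b); congr (_ - _).
rewrite e /v lognM; [|by rewrite expn_gt0|exact: odd_gt0].
by rewrite lognX logn_prime // muln1 logn_coprime ?addn0 // coprime2n.
Qed.

Unset Implicit Arguments.

Theorem proposition8 (n : nat) (ms : seq nat) :
  1 <= n ->
  ms != [::] ->
  sorted gtn ms ->
  n = \sum_(m <- ms) 2 ^ m ->
  symv (gfb n) = n - 1 - (head 0 ms - last 0 ms)
  /\ (forall T : tree, leaves T = n -> colless_minimal T ->
        ~~ isob T (gfb n) -> symv T < symv (gfb n)).
Proof.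
move=> n1 ne so hn.
have dn : d n = head 0 ms - last 0 ms by rewrite hn d_binexp.
rewrite -dn.
have [gs gl] := gfb_shape n1.
have [sG cG] := shape_vals gs; rewrite gl in sG cG.
split; first lia.
move=> T lT cm ni.
have [M1 M2] := ML T; rewrite lT in M1 M2.
have hc : colless T <= colless (gfb n) by apply: cm; rewrite gl lT.
rewrite ltn_neqAle; apply/andP; split; last lia.
apply/eqP => e.
have /M2 sT : symv T + d n + 2 * c n + 1 = 2 * colless T + n by lia.
by move: ni; rewrite shape_uniq // gl lT.
Qed.
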